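(* Let $G$ be an abelian group with $\mathbb{Z}^{(\omega)}\subseteq G\subseteq\mathbb{Z}^\omega$ and $|G|<\mathfrak{p}$. Then $G$ is not weakly $\mathbb{Z}^{(\omega)}$-binding; that is, there is a homomorphism $G\to\mathbb{Z}^{(\omega)}$ that extends to an endomorphism of $\mathbb{Z}^\omega$ and maps $\mathbb{Z}^{(\omega)}$ onto a group of infinite rank.
   Context: $\mathbb{Z}^{\omega}$ is the product of countably many copies of $\mathbb{Z}$; $\mathbb{Z}^{(\omega)}\subseteq\mathbb{Z}^\omega$ is the subgroup of finitely supported sequences. Rank means torsion-free rank. $G$ with $\mathbb{Z}^{(\omega)}\subseteq G\subseteq\mathbb{Z}^\omega$ is weakly $\mathbb{Z}^{(\omega)}$-binding if every homomorphism $G\to\mathbb{Z}^{(\omega)}$ that extends to an endomorphism of $\mathbb{Z}^\omega$ maps $\mathbb{Z}^{(\omega)}$ to a group of finite rank. $\mathfrak{p}$ is the pseudointersection number: the smallest cardinality of a family $\mathcal F$ of subsets of $\omega$ such that every finite subfamily has infinite intersection but there is no infinite $A\subseteq\omega$ with $A\setminus F$ finite for all $F\in\mathcal F$. *)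

(* Defs.v *)
(* Z^omega = nat -> Z (all integer sequences). *)
From Stdlib Require Import ZArith List.
Import ListNotations.
Open Scope Z_scope.

Definition seqZ := nat -> Z.
Definition set_nat := nat -> Prop.

Definition sadd (x y : seqZ) : seqZ := fun n => x n + y n.
Definition sopp (x : seqZ) : seqZ := fun n => - x n.
Definition szero : seqZ := fun _ => 0.
Definition sscale (c : Z) (x : seqZ) : seqZ := fun n => c * x n.

(* Z^(omega): finitely supported sequences *)
Definition finsupp (x : seqZ) : Prop := exists N : nat, forall n, (N <= n)%nat -> x n = 0.

Definition subgroup (G : seqZ -> Prop) : Prop :=
  G szero /\ (forall x y, G x -> G y -> G (sadd x y)) /\ (forall x, G x -> G (sopp x)).

Definition additive (phi : seqZ -> seqZ) : Prop :=
  forall x y, phi (sadd x y) = sadd (phi x) (phi y).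

Fixpoint lincomb (cs : list Z) (xs : list seqZ) : seqZ :=
  match cs, xs with
  | c :: cs', x :: xs' => sadd (sscale c x) (lincomb cs' xs')
  | _, _ => szero
  end.

Definition lin_indep (xs : list seqZ) : Prop :=
  forall cs : list Z, length cs = length xs ->
    lincomb cs xs = szero -> Forall (fun c => c = 0) cs.

Definition infinite_rank (H : seqZ -> Prop) : Prop :=
  forall n : nat, exists xs : list seqZ,
    length xs = n /\ Forall H xs /\ lin_indep xs.

Definition image_finsupp (phi : seqZ -> seqZ) : seqZ -> Prop :=
  fun y => exists x, finsupp x /\ phi x = y.

Definition weakly_binding (G : seqZ -> Prop) : Prop :=
  forall phi : seqZ -> seqZ, additive phi ->
    (forall x, G x -> finsupp (phi x)) ->
    ~ infinite_rank (image_finsupp phi).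

Definition infinite_set (A : set_nat) : Prop := forall n, exists m, (n <= m)%nat /\ A m.

Definition sfip {I : Type} (F : I -> set_nat) : Prop :=
  forall l : list I, infinite_set (fun m => Forall (fun i => F i m) l).

Definition has_pseudointersection {I : Type} (F : I -> set_nat) : Prop :=
  exists A : set_nat, infinite_set A /\
    forall i, exists N : nat, forall m, (N <= m)%nat -> A m -> F i m.

(* |G| < p : every family of subsets of omega of cardinality <= |G|
   (indexed by a type injecting into G) with the SFIP has a pseudointersection *)
Definition card_lt_p (G : seqZ -> Prop) : Prop :=
  forall (I : Type) (F : I -> set_nat),
    (exists f : I -> seqZ, (forall i, G (f i)) /\
        (forall i j, (forall n, f i n = f j n) -> i = j)) ->
    sfip F -> has_pseudointersection F.

(* Main.v *)
Require Import Defs.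
From Stdlib Require Import ZArith List Lia Arith.
From Stdlib Require Import Cantor.
From Stdlib Require Import FunctionalExtensionality ProofIrrelevance IndefiniteDescription.
Import ListNotations.
Open Scope Z_scope.

Definition codeZ (z : Z) : nat := Cantor.to_nat (Z.to_nat z, Z.to_nat (- z)).
Definition decZ (x : nat) : Z := let (p, q) := Cantor.of_nat x in Z.of_nat p - Z.of_nat q.
Lemma decZ_codeZ z : decZ (codeZ z) = z.
Proof. unfold decZ, codeZ. rewrite Cantor.cancel_of_to. lia. Qed.

Fixpoint codeL (l : list Z) : nat :=
  match l with [] => 0%nat | a :: l' => S (Cantor.to_nat (codeZ a, codeL l')) end.
Fixpoint decL (fuel n : nat) : list Z :=
  match fuel with 0%nat => [] | S f =>
    match n with 0%nat => [] | S n' =>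
      let (x, y) := Cantor.of_nat n' in decZ x :: decL f y end end.
Lemma decL_codeL l : forall fuel, (codeL l <= fuel)%nat -> decL fuel (codeL l) = l.
Proof.
  induction l as [|a l IH]; intros fuel H.
  - destruct fuel; reflexivity.
  - destruct fuel as [|f]; simpl in H. lia.
    cbn [decL codeL]. rewrite Cantor.cancel_of_to, decZ_codeZ. f_equal. apply IH.
    pose proof (Cantor.to_nat_non_decreasing (codeZ a) (codeL l)). lia.
Qed.

Definition dec (m : nat) : nat * list Z := let (N, c) := Cantor.of_nat m in (N, decL c c).
Definition enc (N : nat) (l : list Z) : nat := Cantor.to_nat (N, codeL l).
Lemma dec_enc N l : dec (enc N l) = (N, l).
Proof. unfold dec, enc. rewrite Cantor.cancel_of_to. rewrite decL_codeL; auto. Qed.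
Lemma enc_ge N l : (N <= enc N l)%nat.
Proof. unfold enc. pose proof (Cantor.to_nat_non_decreasing N (codeL l)). lia. Qed.

Fixpoint dot (N : nat) (l : list Z) (x : seqZ) : Z :=
  match l with [] => 0 | a :: l' => a * x N + dot (S N) l' x end.

Lemma dot_app u : forall N v x, dot N (u ++ v) x = dot N u x + dot (N + length u) v x.
Proof.
  induction u as [|a u IH]; intros N v x; simpl.
  - rewrite Nat.add_0_r. lia.
  - rewrite IH. replace (S N + length u)%nat with (N + S (length u))%nat by lia. lia.
Qed.
Lemma dot_scale a l : forall N x, dot N (map (Z.mul a) l) x = a * dot N l x.
Proof. induction l as [|b l IH]; intros N x; simpl; [lia|]. rewrite IH. lia. Qed.
Lemma dot_add l : forall N x y, dot N l (sadd x y) = dot N l x + dot N l y.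
Proof. induction l as [|b l IH]; intros N x y; simpl; [lia|]. rewrite IH. unfold sadd. lia. Qed.

Definition e (t : nat) : seqZ := fun n => if Nat.eqb n t then 1 else 0.
Lemma dot_e_out l : forall N t, (t < N \/ N + length l <= t)%nat -> dot N l (e t) = 0.
Proof.
  induction l as [|b l IH]; intros N t H; simpl; [lia|].
  rewrite IH by (simpl in H; lia). unfold e.
  destruct (Nat.eqb_spec N t); [simpl in H; lia|]. lia.
Qed.
Lemma dot_e_in l : forall N p, (p < length l)%nat -> dot N l (e (N + p)) = nth p l 0.
Proof.
  induction l as [|b l IH]; intros N p H; simpl in *; [lia|].
  destruct p as [|p].
  - rewrite dot_e_out by lia. unfold e. rewrite Nat.add_0_r, Nat.eqb_refl. lia.
  - replace (N + S p)%nat with (S N + p)%nat by lia. rewrite IH by lia.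
    unfold e. destruct (Nat.eqb_spec N (S N + p)); [lia|]. lia.
Qed.

Definition nz (l : list Z) : Prop := exists p, (p < length l)%nat /\ nth p l 0 <> 0.

Lemma orth_exists (gs : list seqZ) : forall N, exists l, nz l /\ Forall (fun g => dot N l g = 0) gs.
Proof.
  induction gs as [|g gs IH]; intros N.
  - exists [1]. split; [exists 0%nat; simpl; split; [lia|lia]|constructor].
  - destruct (IH N) as [u [Hu Fu]].
    destruct (Z.eq_dec (dot N u g) 0) as [E|E].
    + exists u. split; [exact Hu|constructor; assumption].
    + destruct (IH (N + length u)%nat) as [v [[p [Hp1 Hp2]] Fv]].
      set (du := dot N u g). set (dv := dot (N + length u) v g).
      exists (map (Z.mul dv) u ++ map (Z.mul (- du)) v). split.
      * exists (length u + p)%nat. rewrite length_app, !length_map. split; [lia|].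
        rewrite app_nth2 by (rewrite length_map; lia).
        rewrite length_map. replace (length u + p - length u)%nat with p by lia.
        rewrite (nth_indep _ 0 (Z.mul (-du) 0)) by (rewrite length_map; lia).
        rewrite map_nth. intro H. apply Z.mul_eq_0 in H. lia.
      * constructor.
        -- rewrite dot_app, length_map, !dot_scale. fold du dv. lia.
        -- rewrite Forall_forall in *. intros h Hh.
           rewrite dot_app, length_map, !dot_scale, Fu, Fv by assumption. lia.
Qed.

Lemma lc_eval (y : nat -> seqZ) (a : nat -> Z)
  (Hy : forall j k, y j k = if Nat.eqb j k then a j else 0) :
  forall cs s k, lincomb cs (map y (seq s (length cs))) k =
    if andb (Nat.leb s k) (Nat.ltb k (s + length cs)) then nth (k - s) cs 0 * a k else 0.
Proof.
  induction cs as [|c cs IH]; intros s k; simpl.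
  - unfold szero. destruct (Nat.leb_spec s k), (Nat.ltb_spec k (s+0)); simpl; try lia; reflexivity.
  - unfold sadd, sscale. rewrite IH, Hy.
    destruct (Nat.eqb_spec s k) as [->|Hne].
    + destruct (Nat.ltb_spec k (k + S (length cs)));
      destruct (Nat.leb_spec (S k) k); destruct (Nat.ltb_spec k (S k + length cs));
      rewrite ?Nat.leb_refl; simpl; try lia. rewrite Nat.sub_diag. lia.
    + destruct (Nat.leb_spec s k); destruct (Nat.ltb_spec k (s + S (length cs)));
      destruct (Nat.leb_spec (S s) k); destruct (Nat.ltb_spec k (S s + length cs)); simpl; try lia.
      replace (k - s)%nat with (S (k - S s)) by lia. simpl. lia.
Qed.

Lemma fold_bound (A : Type) (f : A -> nat) l x : In x l -> (f x <= fold_right (fun i acc => f i + acc) 0 l)%nat.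
Proof. induction l as [|y l IH]; simpl; [contradiction|]. intros [->|H]; [lia|]. specialize (IH H). lia. Qed.

Definition boundZ (z : Z) : nat := Z.to_nat (Z.abs z).

Theorem theorem9 (G : seqZ -> Prop) :
  subgroup G ->
  (forall x, finsupp x -> G x) ->
  card_lt_p G ->
  ~ weakly_binding G /\
  exists phi : seqZ -> seqZ, additive phi /\
    (forall x, G x -> finsupp (phi x)) /\
    infinite_rank (image_finsupp phi).
Proof.
  intros HG Hfin Hp.
  assert (MAIN : exists phi : seqZ -> seqZ, additive phi /\
    (forall x, G x -> finsupp (phi x)) /\ infinite_rank (image_finsupp phi)).
  2:{ split; [|exact MAIN]. intro W. destruct MAIN as [phi [H1 [H2 H3]]].
      exact (W phi H1 H2 H3). }
  set (I := {g : seqZ | G g}).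
  set (F := fun (i : I) (m : nat) =>
     nz (snd (dec m)) /\ dot (fst (dec m)) (snd (dec m)) (proj1_sig i) = 0 /\
     (boundZ (proj1_sig i 0%nat) <= fst (dec m))%nat).
  assert (Hinj : exists f : I -> seqZ, (forall i, G (f i)) /\
        (forall i j, (forall n, f i n = f j n) -> i = j)).
  { exists (@proj1_sig _ _). split; [intros [g Hg]; exact Hg|].
    intros [g Hg] [h Hh] E. simpl in E.
    assert (g = h) by (apply functional_extensionality; exact E). subst h.
    f_equal. apply proof_irrelevance. }
  assert (Hsfip : sfip F).
  { intros l n.
    set (N0 := (n + fold_right (fun i acc => (fun i : I => boundZ (proj1_sig i 0%nat)) i + acc) 0 l)%nat).
    destruct (orth_exists (map (@proj1_sig _ _) l) N0) as [lv [Hnz Hor]].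
    exists (enc N0 lv). split. { pose proof (enc_ge N0 lv). unfold N0 in *. lia. }
    rewrite Forall_forall. intros i Hi. unfold F. rewrite dec_enc. simpl.
    split; [exact Hnz|]. split.
    - rewrite Forall_forall in Hor. apply Hor. apply in_map. exact Hi.
    - unfold N0. pose proof (fold_bound _ (fun i : I => boundZ (proj1_sig i 0%nat)) l i Hi). simpl in H. lia. }
  destruct (Hp I F Hinj Hsfip) as [A [HAinf HA]].
  set (pick := fun n => proj1_sig (constructive_indefinite_description _ (HAinf n))).
  assert (Hpick : forall n, (n <= pick n)%nat /\ A (pick n)).
  { intro n. unfold pick. destruct (constructive_indefinite_description _ _) as [m Hm]. exact Hm. }
  set (thr := fun i => proj1_sig (constructive_indefinite_description _ (HA i))).
  assert (Hthr : forall i m, (thr i <= m)%nat -> A m -> F i m).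
  { intros i. unfold thr. destruct (constructive_indefinite_description _ _) as [T HT]. exact HT. }
  set (sM := fun M : nat => fun n : nat => if Nat.eqb n 0 then Z.of_nat M else 0).
  assert (HsM : forall M, G (sM M)).
  { intro M. apply Hfin. exists 1%nat. intros n Hn. unfold sM.
    destruct (Nat.eqb_spec n 0); [lia|reflexivity]. }
  set (iM := fun M => exist G (sM M) (HsM M) : I).
  set (bnd := fun m => (fst (dec m) + length (snd (dec m)))%nat).
  set (T0 := thr (iM 0%nat)).
  set (ms := fix ms (j : nat) : nat := match j with 0%nat => pick T0
        | S j' => pick (Nat.max (S j') (Nat.max T0 (thr (iM (bnd (ms j')))))) end).
  assert (Hms0 : ms 0%nat = pick T0) by reflexivity.
  assert (HmsS : forall j, ms (S j) = pick (Nat.max (S j) (Nat.max T0 (thr (iM (bnd (ms j))))))) by reflexivity.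
  clearbody ms.
  assert (HmsA : forall j, (j <= ms j)%nat /\ (T0 <= ms j)%nat /\ A (ms j)).
  { intros [|j]; [rewrite Hms0|rewrite HmsS].
    - destruct (Hpick T0). split; [lia|]. split; [lia|assumption].
    - destruct (Hpick (Nat.max (S j) (Nat.max T0 (thr (iM (bnd (ms j))))))).
      split; [lia|]. split; [lia|assumption]. }
  set (Nj := fun j => fst (dec (ms j))).
  set (Lj := fun j => snd (dec (ms j))).
  assert (HF : forall i j, (thr i <= j)%nat -> F i (ms j)).
  { intros i j H. apply Hthr; [|apply HmsA]. pose proof (proj1 (HmsA j)). lia. }
  assert (Hnz : forall j, nz (Lj j)).
  { intro j. apply (Hthr (iM 0%nat)); apply HmsA. }
  assert (Hstep : forall j, (Nj j + length (Lj j) <= Nj (S j))%nat).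
  { intro j. unfold Nj, Lj.
    assert (F (iM (bnd (ms j))) (ms (S j))).
    { apply Hthr; [|apply HmsA]. rewrite HmsS.
      destruct (Hpick (Nat.max (S j) (Nat.max T0 (thr (iM (bnd (ms j))))))). lia. }
    destruct H as [_ [_ H]]. simpl in H. unfold sM in H. simpl in H.
    unfold boundZ in H. rewrite Z.abs_eq in H by lia.
    rewrite Nat2Z.id in H. unfold bnd in H. exact H. }
  assert (Hmono : forall j d, (Nj j + length (Lj j) <= Nj (j + S d))%nat).
  { intros j d. induction d as [|d IH].
    - rewrite Nat.add_1_r. apply Hstep.
    - pose proof (Hstep (j + S d)%nat). replace (j + S (S d))%nat with (S (j + S d)) by lia. lia. }
  set (pj := fun j => proj1_sig (constructive_indefinite_description _ (Hnz j))).
  assert (Hpj : forall j, (pj j < length (Lj j))%nat /\ nth (pj j) (Lj j) 0 <> 0).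
  { intro j. unfold pj. destruct (constructive_indefinite_description _ _) as [q Hq]. exact Hq. }
  set (phi := fun (x : seqZ) (j : nat) => dot (Nj j) (Lj j) x).
  exists phi. split; [|split].
  - intros x y. apply functional_extensionality. intro j. unfold phi. apply dot_add.
  - intros x Hx. exists (thr (exist G x Hx)). intros j Hj.
    destruct (HF (exist G x Hx) j Hj) as [_ [H _]]. exact H.
  - intros n.
    set (tj := fun j => (Nj j + pj j)%nat).
    set (y := fun j => phi (e (tj j))).
    set (a := fun j => nth (pj j) (Lj j) 0).
    assert (Hy : forall j k, y j k = if Nat.eqb j k then a j else 0).
    { intros j k. unfold y, phi, a, tj. destruct (Nat.eqb_spec j k) as [<-|Hne].
      - apply dot_e_in. apply Hpj.
      - apply dot_e_out. pose proof (proj1 (Hpj j)). pose proof (proj1 (Hpj k)).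
        destruct (Nat.lt_ge_cases j k).
        + pose proof (Hmono j (k - j - 1)%nat). replace (j + S (k - j - 1))%nat with k in H2 by lia. lia.
        + pose proof (Hmono k (j - k - 1)%nat). replace (k + S (j - k - 1))%nat with j in H2 by lia. lia. }
    exists (map y (seq 0 n)). split; [|split].
    + rewrite length_map, length_seq. reflexivity.
    + apply Forall_forall. intros z Hz. apply in_map_iff in Hz. destruct Hz as [j [<- _]].
      exists (e (tj j)). split; [|reflexivity]. exists (S (tj j)). intros m Hm. unfold e.
      destruct (Nat.eqb_spec m (tj j)); [lia|reflexivity].
    + intros cs Hlen Hz. rewrite length_map, length_seq in Hlen.
      apply Forall_forall. intros c Hc. apply In_nth with (d := 0) in Hc. destruct Hc as [i [Hi <-]].
      pose proof (lc_eval y a Hy cs 0%nat i) as H. rewrite Hlen in H.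
      pose proof (eq_trans (eq_sym H) (f_equal (fun f => f i) Hz)) as H'. clear H. rename H' into H.
      unfold szero in H.
      destruct (Nat.leb_spec 0 i); [|lia]. destruct (Nat.ltb_spec i (0 + n)); [|lia].
      simpl in H. rewrite Nat.sub_0_r in H. apply Z.mul_eq_0 in H.
      destruct H as [H|H]; [exact H|]. exfalso. apply (proj2 (Hpj i)). exact H.
Qed.
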